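(* Let $\ell$ be an integral domain such that $\operatorname{KH}_0(\ell)\neq0$. Put $\Omega_0=(t^2-t)\ell[t]$ and $\Omega_1=\{(p,q)\in\ell[t]\times\ell[t]: p(1)=q(0),\ p(0)=q(1)=0\}$. Then the algebra homomorphism $\beta:\Omega_0\to\Omega_1$, $\beta(p)=(p,0)$, is not a polynomial homotopy equivalence.
   Context: Algebras are associative not necessarily unital $\ell$-algebras. $\operatorname{KH}_0$ denotes Weibel's homotopy $K$-theory in degree $0$. Polynomial homotopy: $f,g:A\to B$ elementary homotopic if there is a homomorphism $H:A\to B[t]$ with $\mathrm{ev}_0H=f$, $\mathrm{ev}_1H=g$; homotopy is the generated equivalence relation; a polynomial homotopy equivalence is a homomorphism $f$ for which there is $g$ with $gf$ and $fg$ homotopic to the identities. *)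

(* Defs.v *)
From HB Require Import structures.
From mathcomp Require Import all_boot all_order all_algebra.
From Stdlib Require Import Relations.
Set Implicit Arguments. Unset Strict Implicit. Unset Printing Implicit Defensive.
Import GRing.Theory.
Local Open Scope ring_scope.

(* A (not necessarily unital) l-algebra is represented as a subset
   [A : V -> Prop] of a unital l-algebra [V], closed under the operations.
   Homomorphisms A -> B are functions V -> W mapping A into B which are
   l-linear and multiplicative on A (only their values on A matter). *)

Section Defs.
Variable l : comNzRingType.

Definition nu_hom (V W : lalgType l) (A : V -> Prop) (B : W -> Prop)
  (f : V -> W) : Prop :=
  (forall x, A x -> B (f x)) /\
  (forall x y, A x -> A y -> f (x + y) = f x + f y) /\
  (forall (c : l) x, A x -> f (c *: x) = c *: f x) /\
  (forall x y, A x -> A y -> f (x * y) = f x * f y).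

(* B[t] = B (x) l[t] is represented as the polynomials in {poly W} all of
   whose coefficients lie in B; a homomorphism H : A -> B[t]. *)
Definition nu_hom_poly (V W : lalgType l) (A : V -> Prop) (B : W -> Prop)
  (H : V -> {poly W}) : Prop :=
  (forall x i, A x -> B (H x)`_i) /\
  (forall x y, A x -> A y -> H (x + y) = H x + H y) /\
  (forall (c : l) x i, A x -> (H (c *: x))`_i = c *: (H x)`_i) /\
  (forall x y, A x -> A y -> H (x * y) = H x * H y).

Definition elem_htpy (V W : lalgType l) (A : V -> Prop) (B : W -> Prop)
  (f g : V -> W) : Prop :=
  exists H : V -> {poly W}, nu_hom_poly A B H /\
    (forall x, A x -> (H x).[0] = f x) /\
    (forall x, A x -> (H x).[1] = g x).

Definition htpy (V W : lalgType l) (A : V -> Prop) (B : W -> Prop) :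
  relation (V -> W) := clos_refl_sym_trans _ (elem_htpy A B).

Definition htpy_equiv (V W : lalgType l) (A : V -> Prop) (B : W -> Prop)
  (f : V -> W) : Prop :=
  nu_hom A B f /\
  exists g : W -> V, nu_hom B A g /\
    htpy A A (g \o f) id /\ htpy B B (f \o g) id.

Definition Omega0 (p : {poly l}) : Prop :=
  exists q : {poly l}, p = ('X ^+ 2 - 'X) * q.

Definition Omega1 (pq : {poly l} * {poly l}) : Prop :=
  pq.1.[1] = pq.2.[0] /\ pq.1.[0] = 0 /\ pq.2.[1] = 0.

Definition beta (p : {poly l}) : {poly l} * {poly l} := (p, 0).
End Defs.

(* Main.v *)
Require Import Defs.
From mathcomp Require Import all_boot all_order all_algebra.
From Stdlib Require Import Relations.
From mathcomp Require Import ring.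
Set Implicit Arguments. Unset Strict Implicit. Unset Printing Implicit Defensive.
Import GRing.Theory.
Local Open Scope ring_scope.

Section K.
Variable l : idomainType.
Local Notation V := ({poly l} * {poly l})%type.

Definition e1 : V := ('X, 1 - 'X).
Definition x1 : V := ('X - 'X ^+ 2, 0).
Definition x2 : V := (0, 'X - 'X ^+ 2).

Definition Inv (f : V -> V) : Prop :=
  (f x2).1 = 0 /\ (f x1).2 = 0 /\ (f e1).1.[1] = 1.

Lemma pairE (p q : V) : p.1 = q.1 -> p.2 = q.2 -> p = q.
Proof. by case: p q => ? ? [? ?] /= -> ->. Qed.

Lemma idem_const (R : {poly l}) (x y : l) : R * R = R -> R.[x] = R.[y].
Proof.
move=> h.
have : R * (R - 1) = 0 by rewrite mulrBr mulr1 h subrr.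
move/eqP; rewrite mulf_eq0 => /orP [/eqP -> | ]; first by rewrite !hornerE.
by rewrite subr_eq0 => /eqP ->; rewrite !hornerE.
Qed.

Lemma idem01 (R : {poly l}) : R * R = R -> R = 0 \/ R = 1.
Proof.
move=> h.
have : R * (R - 1) = 0 by rewrite mulrBr mulr1 h subrr.
move/eqP; rewrite mulf_eq0 => /orP [/eqP -> | ]; first by left.
by rewrite subr_eq0 => /eqP ->; right.
Qed.

Lemma O1e1 : Omega1 e1.
Proof. rewrite /Omega1 /e1 /= !hornerE; repeat split; ring. Qed.
Lemma O1x1 : Omega1 x1.
Proof. rewrite /Omega1 /x1 /= !hornerE; repeat split; ring. Qed.
Lemma O1x2 : Omega1 x2.
Proof. rewrite /Omega1 /x2 /= !hornerE; repeat split; ring. Qed.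
Lemma O1D (y z : V) : Omega1 y -> Omega1 z -> Omega1 (y + z).
Proof.
rewrite /Omega1 /= => [[h1 [h2 h3]] [k1 [k2 k3]]].
by rewrite !hornerD h1 h2 h3 k1 k2 k3 addr0.
Qed.
Lemma O1M (y z : V) : Omega1 y -> Omega1 z -> Omega1 (y * z).
Proof.
rewrite /Omega1 /= => [[h1 [h2 h3]] [k1 [k2 k3]]].
by rewrite !hornerM h1 h2 h3 k1 k2 k3 mulr0.
Qed.

Lemma decomp : x1 + x2 + e1 * e1 = e1.
Proof.
apply: pairE => /=; ring.
Qed.

Lemma x1x2 : x1 * x2 = 0.
Proof. apply: pairE => /=; ring. Qed.

Lemma inner (P : {poly {poly l}}) (c z : l) :
  (P.[c%:P]).[z] = (map_poly (horner_eval z) P).[c].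
Proof.
have := horner_map (horner_eval z) P c%:P.
by rewrite /= !horner_evalE hornerC => ->.
Qed.

Lemma key (H : V -> {poly V}) (k k' : V) (c d : l) :
  nu_hom_poly (@Omega1 l) (@Omega1 l) H ->
  k.1 = c%:P -> k.2 = c%:P -> k'.1 = d%:P -> k'.2 = d%:P ->
  Inv (fun y => (H y).[k]) -> Inv (fun y => (H y).[k']).
Proof.
move=> [hO [hD [_ hM]]] k1 k2 k1' k2' [i1 [i2 i3]].
pose A y := map_poly fst (H y).
pose B y := map_poly snd (H y).
have evA y kk : ((H y).[kk]).1 = (A y).[kk.1] by rewrite /A horner_map.
have evB y kk : ((H y).[kk]).2 = (B y).[kk.2] by rewrite /B horner_map.
have cross y : Omega1 y ->
  [/\ map_poly (horner_eval 1) (A y) = map_poly (horner_eval 0) (B y),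
      map_poly (horner_eval 0) (A y) = 0 &
      map_poly (horner_eval 1) (B y) = 0].
  move=> Oy; split; apply/polyP => i; rewrite !coef_map /= ?coef0 horner_evalE;
    have [h1 [h2 h3]] := hO y i Oy; rewrite ?horner_evalE //.
have H0 : H 0 = 0.
  have O0 : Omega1 (0 : V) by rewrite /Omega1 /= !hornerE.
  have h := hD 0 0 O0 O0; rewrite [0 + 0]addr0 in h.
  by apply: (addIr (H 0)); rewrite add0r -h.
have AM : A x1 * A x2 = 0.
  by rewrite /A -rmorphM -(hM x1 x2 O1x1 O1x2) x1x2 H0 rmorph0.
have BM : B x1 * B x2 = 0.
  by rewrite /B -rmorphM -(hM x1 x2 O1x1 O1x2) x1x2 H0 rmorph0.
have HD : H x1 + H x2 + H e1 * H e1 = H e1.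
  rewrite -(hM e1 e1 O1e1 O1e1) -(hD x1 x2 O1x1 O1x2).
  by rewrite -(hD _ _ (O1D O1x1 O1x2) (O1M O1e1 O1e1)) decomp.
have AD : A x1 + A x2 + A e1 * A e1 = A e1.
  by rewrite /A -!rmorphM -!rmorphD HD.
have BD : B x1 + B x2 + B e1 * B e1 = B e1.
  by rewrite /B -!rmorphM -!rmorphD HD.
rewrite evA k1 in i1; rewrite evB k2 in i2; rewrite evA k1 in i3.
have [ce1 ce2 ce3] := cross e1 O1e1.
have [cx1 cx2 cx3] := cross x1 O1x1.
have oneN0 : (1 : {poly l}) <> 0 by apply/eqP; rewrite oner_eq0.
have oneN0' : (1 : l) <> 0 by apply/eqP; rewrite oner_eq0.
have A2 : A x2 = 0.
  move/eqP: AM; rewrite mulf_eq0 => /orP [/eqP a1 | /eqP //].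
  exfalso.
  have := congr1 (fun P => P.[c%:P]) AD.
  rewrite /= !hornerE a1 i1 horner0 !add0r => /idem_const h.
  have := h 0 1; rewrite i3 inner ce2 hornerE => /esym; exact: oneN0'.
have B1 : B x1 = 0.
  move/eqP: BM; rewrite mulf_eq0 => /orP [/eqP // | /eqP b2].
  exfalso.
  have := congr1 (fun P => P.[c%:P]) BD.
  rewrite /= !hornerE b2 i2 horner0 !add0r => /idem_const h.
  have := h 0 1; rewrite !inner ce3 -ce1 -inner i3 hornerE; exact: oneN0'.
pose u := map_poly (horner_eval 1) (A e1).
have uu : u * u = u.
  have := congr1 (map_poly (horner_eval 1)) AD.
  rewrite !rmorphD rmorphM /= cx1 B1 A2 !rmorph0 !add0r.
  by rewrite -/u.
have u1 : u = 1.
  case: (idem01 uu) => // u0; exfalso.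
  by move: i3; rewrite inner -/u u0 hornerE => /esym.
split; [|split].
- by rewrite evA A2 hornerE.
- by rewrite evB B1 hornerE.
- by rewrite evA k1' inner -/u u1 hornerE.
Qed.
End K.

Lemma elem_Inv (l : idomainType) (f g : {poly l} * {poly l} -> {poly l} * {poly l}) :
  elem_htpy (@Omega1 l) (@Omega1 l) f g -> (Inv f <-> Inv g).
Proof.
move=> [H [hH [h0 h1]]].
have -> : Inv f <-> Inv (fun y => (H y).[0]).
  by rewrite /Inv (h0 _ (O1x2 l)) (h0 _ (O1x1 l)) (h0 _ (O1e1 l)).
have -> : Inv g <-> Inv (fun y => (H y).[1]).
  by rewrite /Inv (h1 _ (O1x2 l)) (h1 _ (O1x1 l)) (h1 _ (O1e1 l)).
have c0 : (0 : {poly l} * {poly l}).1 = (0 : l)%:P by rewrite polyC0.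
have c0' : (0 : {poly l} * {poly l}).2 = (0 : l)%:P by rewrite polyC0.
have c1 : (1 : {poly l} * {poly l}).1 = (1 : l)%:P by rewrite polyC1.
have c1' : (1 : {poly l} * {poly l}).2 = (1 : l)%:P by rewrite polyC1.
split; [exact: (key hH c0 c0' c1 c1') | exact: (key hH c1 c1' c0 c0')].
Qed.

Lemma htpy_Inv (l : idomainType) (f g : {poly l} * {poly l} -> {poly l} * {poly l}) :
  htpy (@Omega1 l) (@Omega1 l) f g -> (Inv f <-> Inv g).
Proof.
elim=> [x y /elem_Inv // | x | x y _ h | x y z _ h1 _ h2]; try tauto.
Qed.

Theorem lemma3p1 (l : idomainType) :
  ~ htpy_equiv (@Omega0 l) (@Omega1 l) (@beta l).
Proof.
move=> [_ [g [[hg _] [_ hfg]]]].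
have := htpy_Inv hfg.
have Iid : Inv (id : {poly l} * {poly l} -> {poly l} * {poly l}).
  by rewrite /Inv /= !hornerE.
move=> [_ /(_ Iid) [_ [_ h]]].
have [q hq] := hg _ (O1e1 l).
move: h; rewrite /= hq hornerM !hornerE expr1n subrr mul0r => /eqP.
by rewrite eq_sym oner_eq0.
Qed.
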